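(* Let $(D,\dagger)$ be a division $\mathbb{Q}$-algebra with positive involution of Albert type III or IV. In type III let $\alpha^{-1}\colon(\mathbb{H}^e,t)\to(D_\mathbb{R},\dagger)$ be an isomorphism of $\mathbb{R}$-algebras with involution, where $t$ is the canonical (quaternion conjugation) involution on each factor; in type IV let $\alpha^{-1}\colon(\mathrm{M}_d(\mathbb{C})^e,t)\to(D_\mathbb{R},\dagger)$ be an isomorphism of $\mathbb{R}$-algebras with involution, where $t$ is conjugate-transpose on each factor. Let $V$ be a left $D$-vector space with a non-degenerate $(D,\dagger)$-skew-Hermitian form $\psi$, and let $v_1,\dots,v_m$ be a weakly unitary $D$-basis of $V$. Then there exist $s_1,\dots,s_m\in D_\mathbb{R}^\times$ such that the vectors $s_1^{-1}v_1,\dots,s_m^{-1}v_m$ form a weakly unitary $D_\mathbb{R}$-basis of $V_\mathbb{R}$ (with respect to the $\mathbb{R}$-linear extension of $\psi$) satisfying: in type III, $\alpha(\psi(s_j^{-1}v_j,s_j^{-1}v_j))=(i,\dots,i)\in\mathbb{H}^e$ for all $j$; in type IV, for each $j$, $\alpha(\psi(s_j^{-1}v_j,s_j^{-1}v_j))=(\varepsilon_{1j},\dots,\varepsilon_{ej})$ where each $\varepsilon_{lj}$ is a $d\times d$ diagonal matrix with diagonal entries in $\{i,-i\}$; and moreover, for all $j$, \[\lvert s_j\rvert_D\le(2ke)^{1/4}\lvert\psi(v_j,v_j)\rvert_D^{1/2},\] where $k=1$ in type III and $k=d$ in type IV.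
   Context: Type III: $D$ is a totally definite quaternion algebra over a totally real field $F$, $e=[F:\mathbb{Q}]$, $D_\mathbb{R}\cong\mathbb{H}^e$, $\dagger$ the canonical involution. Type IV: the centre $F$ is a CM field, $[F:\mathbb{Q}]=2e$, $d=\sqrt{\dim_F D}$, $D_\mathbb{R}\cong\mathrm{M}_d(\mathbb{C})^e$, and $\dagger$ restricts to complex conjugation on $F$. $D_\mathbb{R}=D\otimes_\mathbb{Q}\mathbb{R}$, $V_\mathbb{R}=V\otimes_\mathbb{Q}\mathbb{R}$, and $\lvert a\rvert_D=\sqrt{\mathrm{Trd}_{D_\mathbb{R}/\mathbb{R}}(aa^\dagger)}$. A $(D,\dagger)$-skew-Hermitian form satisfies $\psi(y,x)=-\psi(x,y)^\dagger$, $\psi(ax,by)=a\psi(x,y)b^\dagger$; non-degenerate means for every $x\ne0$ some $y$ has $\psi(x,y)\ne0$. A basis is weakly unitary if $\psi(v_i,v_j)=0$ for $i\neq j$. *)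

(* Defs.v *)
From HB Require Import structures.
From mathcomp Require Import all_boot all_order all_algebra.
From mathcomp Require Import reals.
From mathcomp Require Import complex.

Set Implicit Arguments.
Unset Strict Implicit.
Unset Printing Implicit Defensive.

Import Order.TTheory GRing.Theory Num.Theory.
Local Open Scope ring_scope.

(* An algebra A of dimension n over a field K is K^n (row vectors 'rV_n)    *)
(* with e_i e_j = \sum_k c i j k e_k.  D = (Q^n, c), D_R = (R^n, ratr o c). *)
Section StructConst.
Variables (K : fieldType) (n : nat) (c : 'I_n -> 'I_n -> 'I_n -> K).

Definition amul (x y : 'rV[K]_n) : 'rV[K]_n :=
  \row_k \sum_(i < n) \sum_(j < n) x 0 i * y 0 j * c i j k.

Definition assoc_unital (u : 'rV[K]_n) : Prop :=
  (forall x y z, amul (amul x y) z = amul x (amul y z)) /\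
  (forall x, amul u x = x /\ amul x u = x).

Definition division (u : 'rV[K]_n) : Prop :=
  u != 0 /\ forall x, x != 0 -> exists y, amul x y = u /\ amul y x = u.

(* the involution x |-> x^dagger is x *m T; it is K-linear by construction *)
Definition involution (T : 'M[K]_n) : Prop :=
  (forall x y, amul x y *m T = amul (y *m T) (x *m T)) /\
  (forall x : 'rV[K]_n, x *m T *m T = x).

(* trace of left multiplication  L_a : x |-> a x  *)
Definition regtr (a : 'rV[K]_n) : K := \sum_(i < n) \sum_(j < n) a 0 j * c j i i.

(* reduced trace of an algebra of degree deg (deg^2 = dimension over the
   centre): Trd = Tr(L_a) / deg *)
Definition Trd (deg : nat) (a : 'rV[K]_n) : K := regtr a / deg%:R.

(* left D-vector space D^m and its D-linear combinations *)
Definition vec (m : nat) := 'I_m -> 'rV[K]_n.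

Definition vadd m (x y : vec m) : vec m := fun i => x i + y i.
Definition smul m (a : 'rV[K]_n) (x : vec m) : vec m := fun i => amul a (x i).
Definition lincomb m (a : 'I_m -> 'rV[K]_n) (v : 'I_m -> vec m) : vec m :=
  fun i => \sum_(j < m) amul (a j) (v j i).

Definition is_basis m (v : 'I_m -> vec m) : Prop :=
  (forall x : vec m, exists a : 'I_m -> 'rV[K]_n, forall i, x i = lincomb a v i) /\
  (forall a : 'I_m -> 'rV[K]_n, (forall i, lincomb a v i = 0) -> forall j, a j = 0).

Definition stdvec m (u : 'rV[K]_n) (i : 'I_m) : vec m :=
  fun i' => if i' == i then u else 0.

Definition skew_hermitian_nondeg m (T : 'M[K]_n) (psi : vec m -> vec m -> 'rV[K]_n) :
  Prop :=
  (forall x x' y, psi (vadd x x') y = psi x y + psi x' y) /\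
  (forall x y y', psi x (vadd y y') = psi x y + psi x y') /\
  (forall a b x y, psi (smul a x) (smul b y) = amul a (amul (psi x y) (b *m T))) /\
  (forall x y, psi y x = - (psi x y *m T)) /\
  (forall x, (exists i, x i != 0) -> exists y, psi x y != 0).

Definition weakly_unitary m (psi : vec m -> vec m -> 'rV[K]_n) (v : 'I_m -> vec m) :
  Prop := forall i j, i != j -> psi (v i) (v j) = 0.

End StructConst.

Definition pos_div_alg n (c : 'I_n -> 'I_n -> 'I_n -> rat) (u : 'rV[rat]_n)
    (T : 'M[rat]_n) (deg : nat) : Prop :=
  assoc_unital c u /\ division c u /\ involution c T /\
  (forall x, x != 0 -> 0 < Trd c deg (amul c x (x *m T))).

Section Extension.
Variable R : realType.

Definition cR n (c : 'I_n -> 'I_n -> 'I_n -> rat) : 'I_n -> 'I_n -> 'I_n -> R :=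
  fun i j k => ratr (c i j k).

Definition toR n (x : 'rV[rat]_n) : 'rV[R]_n := map_mx ratr x.
Definition toRmx n (T : 'M[rat]_n) : 'M[R]_n := map_mx ratr T.
Definition vecR n m (x : vec rat n m) : vec R n m := fun i => toR (x i).

Definition normD n (c : 'I_n -> 'I_n -> 'I_n -> rat) (T : 'M[rat]_n) (deg : nat)
    (a : 'rV[R]_n) : R :=
  Num.sqrt (Trd (cR c) deg (amul (cR c) a (a *m toRmx T))).

(* the R-linear extension of psi to V_R = D_R^m:
   psi_R(x, y) = \sum_{i,k} x_i psi(e_i, e_k) y_k^dagger *)
Definition psiR n m (c : 'I_n -> 'I_n -> 'I_n -> rat) (u : 'rV[rat]_n)
    (T : 'M[rat]_n) (psi : vec rat n m -> vec rat n m -> 'rV[rat]_n)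
    (x y : vec R n m) : 'rV[R]_n :=
  \sum_(i < m) \sum_(k < m)
     amul (cR c) (x i) (amul (cR c) (toR (psi (stdvec u i) (stdvec u k)))
                                    (y k *m toRmx T)).

Record quat := Quat { qre : R; qim : R; qjm : R; qkm : R }.

Definition qadd (p q : quat) : quat :=
  Quat (qre p + qre q) (qim p + qim q) (qjm p + qjm q) (qkm p + qkm q).
Definition qscale (r : R) (p : quat) : quat :=
  Quat (r * qre p) (r * qim p) (r * qjm p) (r * qkm p).
Definition qmul (p q : quat) : quat :=
  Quat (qre p * qre q - qim p * qim q - qjm p * qjm q - qkm p * qkm q)
       (qre p * qim q + qim p * qre q + qjm p * qkm q - qkm p * qjm q)
       (qre p * qjm q - qim p * qkm q + qjm p * qre q + qkm p * qim q)
       (qre p * qkm q + qim p * qjm q - qjm p * qim q + qkm p * qre q).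
Definition qconj (p : quat) : quat := Quat (qre p) (- qim p) (- qjm p) (- qkm p).
Definition qone : quat := Quat 1 0 0 0.
Definition qi : quat := Quat 0 1 0 0.

Definition iso_III n (c : 'I_n -> 'I_n -> 'I_n -> rat) (u : 'rV[rat]_n)
    (T : 'M[rat]_n) (e : nat) (alpha : 'rV[R]_n -> 'I_e -> quat) : Prop :=
  bijective alpha /\
  (forall x y l, alpha (x + y) l = qadd (alpha x l) (alpha y l)) /\
  (forall (r : R) x l, alpha (r *: x) l = qscale r (alpha x l)) /\
  (forall x y l, alpha (amul (cR c) x y) l = qmul (alpha x l) (alpha y l)) /\
  (forall l, alpha (toR u) l = qone) /\
  (forall x l, alpha (x *m toRmx T) l = qconj (alpha x l)).

Definition iso_IV n (c : 'I_n -> 'I_n -> 'I_n -> rat) (u : 'rV[rat]_n)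
    (T : 'M[rat]_n) (e d : nat) (alpha : 'rV[R]_n -> 'I_e -> 'M[R[i]]_d) : Prop :=
  bijective alpha /\
  (forall x y l, alpha (x + y) l = alpha x l + alpha y l) /\
  (forall (r : R) x l, alpha (r *: x) l = (r%:C)%C *: alpha x l) /\
  (forall x y l, alpha (amul (cR c) x y) l = alpha x l *m alpha y l) /\
  (forall l, alpha (toR u) l = 1%:M) /\
  (forall x l, alpha (x *m toRmx T) l = (map_mx (@conjc R) (alpha x l))^T).

End Extension.

(* Main.v *)
Require Import Defs.
From HB Require Import structures.
From mathcomp Require Import all_boot all_order all_algebra.
From mathcomp Require Import reals.
From mathcomp Require Import complex.
From mathcomp Require Import ring lra.
From Stdlib Require Import FunctionalExtensionality ClassicalEpsilon.
Set Implicit Arguments.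
Unset Strict Implicit.
Unset Printing Implicit Defensive.
Import Order.TTheory GRing.Theory Num.Theory.
Local Open Scope ring_scope.
Section AmulFacts.
Variables (K : fieldType) (n : nat) (c : 'I_n -> 'I_n -> 'I_n -> K).
Local Notation mul := (amul c).

Lemma amulDl x y z : mul (x + y) z = mul x z + mul y z.
Proof.
apply/rowP => k; rewrite !mxE -big_split /=; apply: eq_bigr => i _.
rewrite -big_split /=; apply: eq_bigr => j _; rewrite !mxE. ring.
Qed.

Lemma amulDr x y z : mul x (y + z) = mul x y + mul x z.
Proof.
apply/rowP => k; rewrite !mxE -big_split /=; apply: eq_bigr => i _.
rewrite -big_split /=; apply: eq_bigr => j _; rewrite !mxE; ring.
Qed.

Lemma amulZl (r : K) x y : mul (r *: x) y = r *: mul x y.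
Proof.
apply/rowP => k; rewrite !mxE mulr_sumr; apply: eq_bigr => i _.
rewrite mulr_sumr; apply: eq_bigr => j _; rewrite !mxE.
ring.
Qed.

Lemma amulZr (r : K) x y : mul x (r *: y) = r *: mul x y.
Proof.
apply/rowP => k; rewrite !mxE mulr_sumr; apply: eq_bigr => i _.
rewrite mulr_sumr; apply: eq_bigr => j _; rewrite !mxE. ring.
Qed.

Lemma amul0l x : mul 0 x = 0.
Proof. by have := amulZl 0 0 x; rewrite !scale0r. Qed.

Lemma amul0r x : mul x 0 = 0.
Proof. by have := amulZr 0 x 0; rewrite !scale0r. Qed.

Lemma amulNl x y : mul (- x) y = - mul x y.
Proof. by rewrite -scaleN1r amulZl scaleN1r. Qed.

Lemma amulNr x y : mul x (- y) = - mul x y.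
Proof. by rewrite -scaleN1r amulZr scaleN1r. Qed.

Lemma amul_suml (I : Type) (r : seq I) (P : pred I) (F : I -> 'rV[K]_n) y :
  mul (\sum_(i <- r | P i) F i) y = \sum_(i <- r | P i) mul (F i) y.
Proof. exact: (big_morph (fun x => mul x y) (fun a b => amulDl a b y) (amul0l y)). Qed.

Lemma amul_sumr (I : Type) (r : seq I) (P : pred I) (F : I -> 'rV[K]_n) x :
  mul x (\sum_(i <- r | P i) F i) = \sum_(i <- r | P i) mul x (F i).
Proof. exact: (big_morph (fun y => mul x y) (amulDr x) (amul0r x)). Qed.

Lemma regtrE a : regtr c a = \sum_(i < n) (mul a (delta_mx 0 i)) 0 i.
Proof.
rewrite /regtr; apply: eq_bigr => i _; rewrite !mxE.
apply: eq_bigr => j _; rewrite (bigD1 i) //= big1 ?addr0 => [|k kni].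
  by rewrite !mxE !eqxx mulr1.
by rewrite !mxE (negbTE kni) andbF mulr0 mul0r.
Qed.

End AmulFacts.
Section RatSide.
Variables (n m : nat) (c : 'I_n -> 'I_n -> 'I_n -> rat) (u : 'rV[rat]_n)
  (T : 'M[rat]_n) (psi : vec rat n m -> vec rat n m -> 'rV[rat]_n).
Hypothesis HAU : assoc_unital c u.
Hypothesis HI : involution c T.
Hypothesis HSH : skew_hermitian_nondeg c T psi.
Local Notation mul := (amul c).
Local Notation dag x := ((x : 'rV[rat]_n) *m T).

Lemma mulA x y z : mul (mul x y) z = mul x (mul y z).
Proof. by case: HAU => H _; apply: H. Qed.
Lemma mul1x x : mul u x = x. Proof. by case: HAU => _ H; case: (H x). Qed.
Lemma mulx1 x : mul x u = x. Proof. by case: HAU => _ H; case: (H x). Qed.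
Lemma dagM x y : dag (mul x y) = mul (dag y) (dag x). Proof. by case: HI => H _; apply: H. Qed.
Lemma dagK x : dag (dag x) = x. Proof. by case: HI => _ H; apply: H. Qed.
Lemma dag1 : dag u = u.
Proof.
have H y : mul (dag u) y = y.
  by rewrite -[y in LHS]dagK -dagM mulx1 dagK.
by rewrite -[LHS]mulx1 H.
Qed.

Lemma smul_u (x : vec rat n m) : smul c u x = x.
Proof. by apply: functional_extensionality => i; rewrite /smul mul1x. Qed.

Lemma psi_smulr x b y : psi x (smul c b y) = mul (psi x y) (dag b).
Proof.
case: HSH => _ [_ [H _]]. by rewrite -{1}(smul_u x) H mul1x.
Qed.

Lemma psi_smull a x y : psi (smul c a x) y = mul a (psi x y).
Proof.
case: HSH => _ [_ [H _]]. by rewrite -{1}(smul_u y) H dag1 mulx1.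
Qed.

Lemma psi_zero_l y : psi (fun _ => 0) y = 0.
Proof.
case: HSH => [H _].
have := H (fun _ => 0) (fun _ => 0) y.
have -> : vadd (fun _ : 'I_m => (0 : 'rV[rat]_n)) (fun _ => 0) = (fun _ => 0).
  by apply: functional_extensionality => i; rewrite /vadd addr0.
by set p := psi _ _ => E; have := congr1 (fun t => t - p) E; rewrite /= subrr addrK => <-.
Qed.

Lemma psi_zero_r x : psi x (fun _ => 0) = 0.
Proof.
case: HSH => [_ [H _]].
have := H x (fun _ => 0) (fun _ => 0).
have -> : vadd (fun _ : 'I_m => (0 : 'rV[rat]_n)) (fun _ => 0) = (fun _ => 0).
  by apply: functional_extensionality => i; rewrite /vadd addr0.
by set p := psi _ _ => E; have := congr1 (fun t => t - p) E; rewrite /= subrr addrK => <-.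
Qed.

Lemma psi_sum_l (J : Type) (r : seq J) (F : J -> vec rat n m) y :
  psi (fun i => \sum_(j <- r) F j i) y = \sum_(j <- r) psi (F j) y.
Proof.
elim: r => [|j r IH].
  rewrite big_nil; transitivity (psi (fun _ => 0) y); last exact: psi_zero_l.
  congr psi.
  by apply: functional_extensionality => i; rewrite big_nil.
rewrite big_cons -IH; case: HSH => [H _]; rewrite -H; congr psi.
by apply: functional_extensionality => i; rewrite big_cons.
Qed.

Lemma psi_sum_r (J : Type) (r : seq J) (F : J -> vec rat n m) x :
  psi x (fun i => \sum_(j <- r) F j i) = \sum_(j <- r) psi x (F j).
Proof.
elim: r => [|j r IH].
  rewrite big_nil; transitivity (psi x (fun _ => 0)); last exact: psi_zero_r.
  congr psi.
  by apply: functional_extensionality => i; rewrite big_nil.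
rewrite big_cons -IH; case: HSH => [_ [H _]]; rewrite -H; congr psi.
by apply: functional_extensionality => i; rewrite big_cons.
Qed.

Lemma vec_expand (x : vec rat n m) :
  x = (fun i' => \sum_(i < m) smul c (x i) (stdvec u i) i').
Proof.
apply: functional_extensionality => i'.
rewrite (bigD1 i') //= big1 ?addr0 => [|i ni].
  by rewrite /smul /stdvec eqxx mulx1.
by rewrite /smul /stdvec eq_sym (negbTE ni) amul0r.
Qed.

Lemma vec_expand_pt (x : vec rat n m) i' :
  \sum_(i < m) mul (x i) (stdvec u i i') = x i'.
Proof. by have := congr1 (fun f => f i') (vec_expand x) => /= ->. Qed.

Lemma psi_expand x y :
  psi x y = \sum_(i < m) \sum_(k < m)
     mul (x i) (mul (psi (stdvec u i) (stdvec u k)) (dag (y k))).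
Proof.
rewrite {1}(vec_expand x) psi_sum_l; apply: eq_bigr => i _.
rewrite {1}(vec_expand y) psi_sum_r; apply: eq_bigr => k _.
case: HSH => [_ [_ [H _]]]; by rewrite H.
Qed.

End RatSide.
Section RealSide.
Variables (R : realType) (n m : nat) (c : 'I_n -> 'I_n -> 'I_n -> rat) (u : 'rV[rat]_n)
  (T : 'M[rat]_n) (psi : vec rat n m -> vec rat n m -> 'rV[rat]_n).
Local Notation mR := (amul (cR R c)).
Local Notation tR := (@toR R n).
Local Notation dagR x := ((x : 'rV[R]_n) *m toRmx R T).

Lemma toRD x y : tR (x + y) = tR x + tR y.
Proof. by rewrite /toR map_mxD. Qed.
Lemma toR0 : tR 0 = 0.
Proof. by rewrite /toR map_mx0. Qed.
Lemma toR_sum (J : Type) (r : seq J) (F : J -> 'rV[rat]_n) :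
  tR (\sum_(j <- r) F j) = \sum_(j <- r) tR (F j).
Proof. exact: (big_morph _ toRD toR0). Qed.
Lemma toRM x y : tR (amul c x y) = mR (tR x) (tR y).
Proof.
apply/rowP => k; rewrite !mxE rmorph_sum; apply: eq_bigr => i _.
rewrite rmorph_sum; apply: eq_bigr => j _; by rewrite !mxE !rmorphM.
Qed.
Lemma toR_dag x : tR (x *m T) = dagR (tR x).
Proof. by rewrite /toR /toRmx map_mxM. Qed.
Lemma toR_eq0 x : (tR x == 0) = (x == 0).
Proof.
apply/eqP/eqP => [H|->]; last exact: toR0.
apply/rowP => k; have /rowP/(_ k) := H; rewrite !mxE => /eqP.
by rewrite fmorph_eq0 => /eqP.
Qed.

Hypothesis HAU : assoc_unital c u.
Hypothesis HI : involution c T.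
Hypothesis HSH : skew_hermitian_nondeg c T psi.

Lemma psiR_vecR x y : psiR c u T psi (vecR R x) (vecR R y) = tR (psi x y).
Proof.
rewrite (psi_expand HAU HSH) toR_sum /psiR; apply: eq_bigr => i _.
rewrite toR_sum; apply: eq_bigr => k _.
by rewrite !toRM toR_dag.
Qed.

Hypothesis mRA : forall x y z, mR (mR x y) z = mR x (mR y z).
Hypothesis mR1 : forall x, mR (tR u) x = x /\ mR x (tR u) = x.
Hypothesis dagRM : forall x y, dagR (mR x y) = mR (dagR y) (dagR x).

Lemma psiR_smul a b x y :
  psiR c u T psi (smul (cR R c) a x) (smul (cR R c) b y) =
  mR a (mR (psiR c u T psi x y) (dagR b)).
Proof.
rewrite /psiR amul_suml amul_sumr; apply: eq_bigr => i _.
rewrite amul_suml amul_sumr; apply: eq_bigr => k _.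
by rewrite /smul dagRM !mRA.
Qed.

End RealSide.
Section BasisRat.
Variables (n m : nat) (c : 'I_n -> 'I_n -> 'I_n -> rat) (u : 'rV[rat]_n)
  (T : 'M[rat]_n) (psi : vec rat n m -> vec rat n m -> 'rV[rat]_n)
  (v : 'I_m -> vec rat n m).
Hypothesis HAU : assoc_unital c u.
Hypothesis HSH : skew_hermitian_nondeg c T psi.
Hypothesis Hb : is_basis c v.
Hypothesis Hwu : weakly_unitary psi v.
Hypothesis Hu : u != 0.
Local Notation mul := (amul c).

Lemma v_nz j : exists i, v j i != 0.
Proof.
have [/existsP [i Hi]|/existsPn H] := boolP [exists i, v j i != 0]; first by exists i.
exfalso; move/negP: Hu; apply; apply/eqP.
case: Hb => _ /(_ (fun j' => if j' == j then u else 0)) H2.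
suff: (if j == j then u else 0) = 0 by rewrite eqxx.
apply: H2 => i; rewrite /lincomb (bigD1 j) //= big1 ?addr0 => [|k kj].
  by rewrite eqxx (mul1x HAU); have := H i; rewrite negbK => /eqP.
by rewrite (negbTE kj) amul0l.
Qed.

Lemma psi_vv_nz j : psi (v j) (v j) != 0.
Proof.
have [i Hi] := v_nz j.
case: (HSH) => _ [_ [_ [_ /(_ (v j)) Hnd]]].
have [y Hy] := Hnd (ex_intro _ i Hi).
case: Hb => /(_ y) [b Hyb] _.
apply: contraNneq Hy => H0.
have -> : y = (fun i => \sum_(k < m) smul c (b k) (v k) i).
  by apply: functional_extensionality => i'; rewrite Hyb.
rewrite (psi_sum_r HSH) (bigD1 j) //= big1 ?addr0 => [|k kj].
  by rewrite (psi_smulr HAU HSH) H0 amul0l.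
by rewrite (psi_smulr HAU HSH) Hwu 1?eq_sym // amul0l.
Qed.

Definition Acoef : 'I_m -> 'I_m -> 'rV[rat]_n := fun i0 =>
  proj1_sig (constructive_indefinite_description _ (proj1 Hb (stdvec u i0))).

Lemma AcoefP i0 i : stdvec u i0 i = \sum_(j < m) mul (Acoef i0 j) (v j i).
Proof.
rewrite /Acoef; case: constructive_indefinite_description => a Ha /=.
by rewrite Ha.
Qed.

Lemma VA j0 j : \sum_(i < m) mul (v j0 i) (Acoef i j) = if j == j0 then u else 0.
Proof.
apply/eqP; rewrite -subr_eq0; apply/eqP; move: j.
case: Hb => _; apply => i'.
rewrite /lincomb.
under eq_bigr => j _ do rewrite amulDl amulNl amul_suml.
rewrite sumrB exchange_big /=.
have -> : \sum_(i < m) mul (if i == j0 then u else 0) (v i i') = v j0 i'.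
  rewrite (bigD1 j0) //= big1 ?addr0 => [|k kj]; last by rewrite (negbTE kj) amul0l.
  by rewrite eqxx (mul1x HAU).
have -> : \sum_(i < m) \sum_(j < m) mul (mul (v j0 i) (Acoef i j)) (v j i') =
          \sum_(i < m) mul (v j0 i) (stdvec u i i').
  apply: eq_bigr => i _; rewrite AcoefP amul_sumr; apply: eq_bigr => j _.
  by rewrite (mulA HAU).
by rewrite (vec_expand_pt HAU) subrr.
Qed.

End BasisRat.
Section BasisReal.
Variables (R : realType) (n m : nat) (c : 'I_n -> 'I_n -> 'I_n -> rat) (u : 'rV[rat]_n)
  (v : 'I_m -> vec rat n m).
Hypothesis HAU : assoc_unital c u.
Hypothesis Hb : is_basis c v.
Local Notation mR := (amul (cR R c)).
Local Notation tR := (@toR R n).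
Hypothesis mRA : forall x y z, mR (mR x y) z = mR x (mR y z).
Hypothesis mR1 : forall x, mR (tR u) x = x /\ mR x (tR u) = x.

Lemma vec_expandR (x : vec R n m) i :
  \sum_(i0 < m) mR (x i0) (tR (stdvec u i0 i)) = x i.
Proof.
rewrite (bigD1 i) //= big1 ?addr0 => [|k ki].
  by rewrite /stdvec eqxx; case: (mR1 (x i)).
by rewrite /stdvec eq_sym (negbTE ki) toR0 amul0r.
Qed.

Lemma basisR (s sinv : 'I_m -> 'rV[R]_n)
  (Hss : forall j, mR (s j) (sinv j) = tR u /\ mR (sinv j) (s j) = tR u) :
  is_basis (cR R c) (fun j => smul (cR R c) (sinv j) (vecR R (v j))).
Proof.
split.
  move=> x.
  exists (fun j => mR (\sum_(i0 < m) mR (x i0) (tR (Acoef u Hb i0 j))) (s j)) => i.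
  rewrite /lincomb /smul /vecR.
  under eq_bigr => j _ do rewrite mRA -(mRA (s j)) (proj1 (Hss j)) (proj1 (mR1 _)).
  under eq_bigr => j _ do rewrite amul_suml.
  rewrite exchange_big /= -{1}(vec_expandR x i). apply: eq_big => // i0 _.
  rewrite (AcoefP u Hb) toR_sum amul_sumr; apply: eq_bigr => j _.
  by rewrite toRM mRA.
move=> a Ha j.
set b := fun j => mR (a j) (sinv j).
have Hb0 : forall i, \sum_(j < m) mR (b j) (tR (v j i)) = 0.
  move=> i; rewrite -[RHS](Ha i) /lincomb; apply: eq_bigr => k _.
  by rewrite /b /smul /vecR mRA.
have Hbj : b j = 0.
  have -> : b j = \sum_(j0 < m) mR (b j0) (tR (if j == j0 then u else 0)).
    rewrite (bigD1 j) //= big1 ?addr0 => [|k kj].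
      by rewrite eqxx; case: (mR1 (b j)).
    by rewrite eq_sym (negbTE kj) toR0 amul0r.
  under eq_bigr => j0 _ do rewrite -(VA HAU Hb) toR_sum amul_sumr.
  rewrite exchange_big /= big1 // => i _.
  under eq_bigr => j0 _ do rewrite toRM -mRA.
  by rewrite -amul_suml Hb0 amul0l.
have -> : a j = mR (b j) (s j).
  by rewrite /b mRA (proj2 (Hss j)); case: (mR1 (a j)).
by rewrite Hbj amul0l.
Qed.

End BasisReal.
Section Generic.
Variables (R : realType) (n m : nat) (c : 'I_n -> 'I_n -> 'I_n -> rat) (u : 'rV[rat]_n)
  (T : 'M[rat]_n) (psi : vec rat n m -> vec rat n m -> 'rV[rat]_n)
  (v : 'I_m -> vec rat n m).
Local Notation mR := (amul (cR R c)).
Local Notation tR := (@toR R n).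
Local Notation dagR x := ((x : 'rV[R]_n) *m toRmx R T).

Lemma trace_decomp (I : finType) (beta : I -> 'rV[R]_n -> R) (b : I -> 'rV[R]_n) :
  (forall t x y, beta t (x + y) = beta t x + beta t y) ->
  (forall t r x, beta t (r *: x) = r * beta t x) ->
  (forall x, x = \sum_t beta t x *: b t) ->
  forall a, regtr (cR R c) a = \sum_t beta t (mR a (b t)).
Proof.
move=> bD bZ Hrec a; rewrite regtrE.
have b0 t : beta t 0 = 0 by rewrite -(scale0r (0 : 'rV[R]_n)) bZ mul0r.
under eq_bigr => i _ do rewrite {1}(Hrec (delta_mx 0 i)) amul_sumr summxE.
rewrite exchange_big /=; apply: eq_bigr => t _.
rewrite [in RHS](row_sum_delta (mR a (b t))).
rewrite (big_morph (beta t) (bD t) (b0 t)); apply: eq_bigr => i _.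
by rewrite amulZr mxE bZ mulrC.
Qed.

Hypothesis HAU : assoc_unital c u.
Hypothesis HI : involution c T.
Hypothesis HSH : skew_hermitian_nondeg c T psi.
Hypothesis Hb : is_basis c v.
Hypothesis Hwu : weakly_unitary psi v.
Hypothesis mRA : forall x y z, mR (mR x y) z = mR x (mR y z).
Hypothesis mR1 : forall x, mR (tR u) x = x /\ mR x (tR u) = x.
Hypothesis dagRM : forall x y, dagR (mR x y) = mR (dagR y) (dagR x).

Lemma generic_main (s sinv : 'I_m -> 'rV[R]_n)
  (Hss : forall j, mR (s j) (sinv j) = tR u /\ mR (sinv j) (s j) = tR u) :
  let w : 'I_m -> vec R n m := fun j => smul (cR R c) (sinv j) (vecR R (v j)) in
  is_basis (cR R c) w /\ weakly_unitary (psiR c u T psi) w /\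
  forall j, psiR c u T psi (w j) (w j) =
            mR (sinv j) (mR (tR (psi (v j) (v j))) (dagR (sinv j))).
Proof.
move=> w; split; first exact: (basisR HAU Hb mRA mR1 Hss).
split.
  move=> i j ij; rewrite /w (psiR_smul u psi mRA dagRM) (psiR_vecR R HAU HSH) Hwu //.
  by rewrite toR0 amul0l amul0r.
by move=> j; rewrite /w (psiR_smul u psi mRA dagRM) (psiR_vecR R HAU HSH).
Qed.

Lemma a_skew j : dagR (tR (psi (v j) (v j))) = - tR (psi (v j) (v j)).
Proof.
rewrite -toR_dag; case: HSH => _ [_ [_ [H _]]].
have E := H (v j) (v j).
have -> : psi (v j) (v j) *m T = - psi (v j) (v j) by rewrite {2}E opprK.
by rewrite /toR map_mxN.
Qed.

Lemma a_inv (Hdiv : division c u) j :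
  exists ainv, mR (tR (psi (v j) (v j))) ainv = tR u /\ mR ainv (tR (psi (v j) (v j))) = tR u.
Proof.
case: Hdiv => Hu /(_ (psi (v j) (v j)) (psi_vv_nz HAU HSH Hb Hwu Hu j)) [y [H1 H2]].
by exists (tR y); rewrite -!toRM H1 H2.
Qed.

End Generic.
Section RealIneq.
Variable R : realType.

Lemma cauchy_schwarz_count (I : finType) (f : I -> R) :
  (\sum_i f i) ^+ 2 <= #|I|%:R * \sum_i f i ^+ 2.
Proof.
have H : 0 <= \sum_i \sum_j (f i - f j) ^+ 2.
  by apply: sumr_ge0 => i _; apply: sumr_ge0 => j _; apply: sqr_ge0.
have S1 : \sum_(i : I) \sum_(j : I) f i ^+ 2 = #|I|%:R * \sum_i f i ^+ 2.
  by rewrite mulr_sumr; apply: eq_bigr => i _; rewrite sumr_const mulr_natl.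
have S2 : \sum_(i : I) \sum_(j : I) f j ^+ 2 = #|I|%:R * \sum_i f i ^+ 2.
  by rewrite sumr_const mulr_natl.
have S3 : \sum_(i : I) \sum_(j : I) (f i * f j) = (\sum_i f i) ^+ 2.
  by rewrite expr2 mulr_suml; apply: eq_bigr => i _; rewrite mulr_sumr.
have E : \sum_i \sum_j (f i - f j) ^+ 2 =
         2 * (#|I|%:R * \sum_i f i ^+ 2 - (\sum_i f i) ^+ 2).
  transitivity (\sum_(i : I) \sum_(j : I) f i ^+ 2 + \sum_(i : I) \sum_(j : I) f j ^+ 2
      - 2 * \sum_(i : I) \sum_(j : I) (f i * f j)); last by rewrite S1 S2 S3; ring.
  rewrite mulr_sumr -big_split -sumrB /=; apply: eq_bigr => i _.
  rewrite mulr_sumr -big_split -sumrB /=; apply: eq_bigr => j _.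
  ring.
by move: H; rewrite E pmulr_rge0 ?ltr0n // subr_ge0.
Qed.

Lemma final_ineq (N : nat) (Sr Q : R) : 0 <= Sr -> 0 <= Q ->
  Sr ^+ 2 <= N%:R * Q ->
  Num.sqrt (2 * Sr) <= Num.sqrt (Num.sqrt ((2 * N)%N%:R)) * Num.sqrt (Num.sqrt (2 * Q)).
Proof.
move=> HS HQ H.
rewrite -sqrtrM ?sqrtr_ge0 // -sqrtrM ?ler0n // ler_sqrt ?sqrtr_ge0 //.
have -> : 2 * Sr = Num.sqrt ((2 * Sr) ^+ 2) by rewrite sqrtr_sqr ger0_norm // mulr_ge0.
rewrite ler_sqrt ?mulr_ge0 ?ler0n //.
rewrite natrM exprMn.
have -> : (2 : R) ^+ 2 = 2%:R * 2 by rewrite expr2.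
have E : 2%:R * N%:R * (2 * Q) = 2%:R * 2 * (N%:R * Q) by ring.
rewrite E ler_pM2l ?mulr_gt0 ?ltr0n //.
Qed.

End RealIneq.
Section Quaternions.
Variable R : realType.
Local Notation quat := (quat R).
Local Notation Quat := (@Quat R).

Definition qzero : quat := Quat 0 0 0 0.
Definition qcomp (k : 'I_4) (q : quat) : R :=
  match nat_of_ord k with 0 => qre q | 1 => qim q | 2 => qjm q | _ => qkm q end.
Definition qbasis (k : 'I_4) : quat :=
  match nat_of_ord k with 0 => Quat 1 0 0 0 | 1 => Quat 0 1 0 0
  | 2 => Quat 0 0 1 0 | _ => Quat 0 0 0 1 end.
Definition qn2 (q : quat) : R := qre q ^+ 2 + qim q ^+ 2 + qjm q ^+ 2 + qkm q ^+ 2.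

Lemma quat_eq (p q : quat) : qre p = qre q -> qim p = qim q -> qjm p = qjm q ->
  qkm p = qkm q -> p = q.
Proof. by case: p => ????; case: q => ???? /= -> -> -> ->. Qed.

Lemma quat_eqc (p q : quat) : (forall k, qcomp k p = qcomp k q) -> p = q.
Proof.
move=> H; apply: quat_eq; [exact: (H 0) | exact: (H 1) | exact: (H 2) | exact: (H 3)].
Qed.

Ltac qring := let p := fresh in
  repeat match goal with q : quat |- _ => case: q => ???? end;
  apply: quat_eq => /=; ring.

Lemma qmulA (p q r : quat) : qmul (qmul p q) r = qmul p (qmul q r). Proof. qring. Qed.
Lemma qconjM (p : quat) (q : quat) : qconj (qmul p q) = qmul (qconj q) (qconj p). Proof. qring. Qed.
Lemma qconjK (p : quat) : qconj (qconj p) = p. Proof. qring. Qed.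
Lemma qmul1q (p : quat) : qmul (qone R) p = p. Proof. qring. Qed.
Lemma qmulq1 (p : quat) : qmul p (qone R) = p. Proof. qring. Qed.
Lemma qmul_conj (p : quat) : qmul p (qconj p) = Quat (qn2 p) 0 0 0.
Proof. rewrite /qn2; qring. Qed.
Lemma qmul_conjl (p : quat) : qmul (qconj p) p = Quat (qn2 p) 0 0 0.
Proof. rewrite /qn2; qring. Qed.
Lemma qmulZl (a : R) (p : quat) (q : quat) : qmul (qscale a p) q = qscale a (qmul p q). Proof. qring. Qed.
Lemma qmulZr (a : R) (p : quat) (q : quat) : qmul p (qscale a q) = qscale a (qmul p q). Proof. qring. Qed.
Lemma qconjZ (a : R) (p : quat) : qconj (qscale a p) = qscale a (qconj p). Proof. qring. Qed.
Lemma qmul_real (a : R) (p : quat) : qmul (Quat a 0 0 0) p = qscale a p. Proof. qring. Qed.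
Lemma qmul_realr (a : R) (p : quat) : qmul p (Quat a 0 0 0) = qscale a p. Proof. qring. Qed.
Lemma qscaleA (a b : R) (p : quat) : qscale a (qscale b p) = qscale (a * b) p. Proof. qring. Qed.
Lemma qscale1 (p : quat) : qscale 1 p = p. Proof. qring. Qed.

Lemma qcompD k (p q : quat) : qcomp k (qadd p q) = qcomp k p + qcomp k q.
Proof. by case: k => [[|[|[|[|k]]]] Hk]. Qed.
Lemma qcompZ k (a : R) (p : quat) : qcomp k (qscale a p) = a * qcomp k p.
Proof. by case: k => [[|[|[|[|k]]]] Hk]. Qed.
Lemma qcomp0 k : qcomp k qzero = 0.
Proof. by case: k => [[|[|[|[|k]]]] Hk]. Qed.
Lemma qcomp_basis k k' : qcomp k' (qbasis k) = (k == k')%:R.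
Proof.
by case: k => [[|[|[|[|k]]]] Hk] //; case: k' => [[|[|[|[|k']]]] Hk'].
Qed.
Lemma qtrace (A : quat) : \sum_(k < 4) qcomp k (qmul A (qbasis k)) = 4%:R * qre A.
Proof.
rewrite !big_ord_recr big_ord0 /=; case: A => a b c d /=.
rewrite /qcomp /qbasis /=; ring.
Qed.

Lemma sub_hyp (a b h1 h2 : R) : a - b = h1 - h2 -> h1 = h2 -> a = b.
Proof. by move=> E H; apply/eqP; rewrite -subr_eq0 E H subrr. Qed.

Lemma qnf_case1 (x y z r kk : R) : r ^+ 2 = x ^+ 2 + y ^+ 2 + z ^+ 2 ->
  kk ^+ 2 = 2 * (r + x) -> kk != 0 -> r + x != 0 ->
  let S := Quat ((r + x) / kk) 0 (- z / kk) (y / kk) in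
  qn2 S = r /\ qmul S (qmul (qi R) (qconj S)) = Quat 0 x y z.
Proof.
move=> hr hk kk0 rx0 S.
have hk' : kk ^+ 2 != 0 by rewrite expf_neq0.
have h2 : 2 * (r + x) != 0 by rewrite -hk.
split.
  rewrite /qn2 /=.
  transitivity (((r + x) ^+ 2 + y ^+ 2 + z ^+ 2) / kk ^+ 2); first by field.
  rewrite hk; apply: (mulIf h2); rewrite divfK //; apply: (sub_hyp (h2 := r ^+ 2) (h1 := x ^+ 2 + y ^+ 2 + z ^+ 2)) => //.
  ring.
apply: quat_eq => /=.
- by field.
- transitivity (((r + x) ^+ 2 - y ^+ 2 - z ^+ 2) / kk ^+ 2); first by field.
  rewrite hk; apply: (mulIf h2); rewrite divfK //; apply: (sub_hyp (h1 := r ^+ 2) (h2 := x ^+ 2 + y ^+ 2 + z ^+ 2)) => //.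
  ring.
- transitivity ((2 * (r + x)) * y / kk ^+ 2); first by field.
  by rewrite hk [_ * (r + x) * _]mulrC mulfK.
- transitivity ((2 * (r + x)) * z / kk ^+ 2); first by field.
  by rewrite hk [_ * (r + x) * _]mulrC mulfK.
Qed.

Lemma quat_nf (A : quat) : qre A = 0 -> qn2 A != 0 ->
  exists S, qn2 S = Num.sqrt (qn2 A) /\ qmul S (qmul (qi R) (qconj S)) = A.
Proof.
case: A => a x y z /= a0 hA; subst a.
have hq : qn2 (Quat 0 x y z) = x ^+ 2 + y ^+ 2 + z ^+ 2 by rewrite /qn2 /=; ring.
rewrite hq in hA *.
have hq0 : 0 <= x ^+ 2 + y ^+ 2 + z ^+ 2 by rewrite !addr_ge0 ?sqr_ge0.
set r := Num.sqrt _.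
have hr : r ^+ 2 = x ^+ 2 + y ^+ 2 + z ^+ 2 by rewrite /r sqr_sqrtr.
have r0 : 0 <= r by rewrite /r sqrtr_ge0.
have rx : - x <= r.
  apply: (le_trans (y := `|x|)); first by rewrite -normrN ler_norm.
  rewrite -sqrtr_sqr /r ler_sqrt //; rewrite -addrA lerDl addr_ge0 ?sqr_ge0 //.
case: (ltrP 0 (r + x)) => Hrx.
  set kk := Num.sqrt (2 * (r + x)).
  have hk : kk ^+ 2 = 2 * (r + x) by rewrite /kk sqr_sqrtr // mulr_ge0 // ltW.
  have kk0 : kk != 0 by rewrite /kk sqrtr_eq0 -ltNge mulr_gt0.
  have [H1 H2] := qnf_case1 hr hk kk0 (lt0r_neq0 Hrx).
  by eexists; split; [exact: H1 | exact: H2].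
have rx0 : r + x = 0 by apply/eqP; rewrite eq_le Hrx /= -lerBlDr sub0r.
have yz : y ^+ 2 + z ^+ 2 = 0.
  have -> : y ^+ 2 + z ^+ 2 = r ^+ 2 - x ^+ 2 by rewrite hr; ring.
  have -> : r = - x by apply/eqP; rewrite -subr_eq0 opprK rx0.
  by rewrite sqrrN subrr.
move/eqP: yz; rewrite paddr_eq0 ?sqr_ge0 // !sqrf_eq0 => /andP [/eqP y0 /eqP z0].
subst y z.
exists (Quat 0 0 (Num.sqrt r) 0); split.
  rewrite /qn2 /= sqr_sqrtr //; ring.
apply: quat_eq => /=; try ring.
have -> : x = - r by apply/eqP; rewrite -subr_eq0 opprK addrC rx0.
have hs := sqr_sqrtr r0; move: (Num.sqrt r) hs => s hs; rewrite -hs; ring.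
Qed.

Lemma quat_inv (S A : quat) : qn2 S != 0 -> qmul S (qmul (qi R) (qconj S)) = A ->
  let Sinv := qscale (qn2 S)^-1 (qconj S) in
  [/\ qmul S Sinv = qone R, qmul Sinv S = qone R &
      qmul Sinv (qmul A (qconj Sinv)) = qi R].
Proof.
case: S => a b c d; rewrite /qn2 /= => H E; subst A.
split; apply: quat_eq => /=; field => //.
Qed.

Lemma qn2M (p q : quat) : qn2 (qmul p q) = qn2 p * qn2 q.
Proof. by case: p => ????; case: q => ????; rewrite /qn2 /=; ring. Qed.
Lemma qn2_one : qn2 (qone R) = 1.
Proof. by rewrite /qn2 /=; ring. Qed.
Lemma qn2_ge0 (p : quat) : 0 <= qn2 p.
Proof. by rewrite /qn2 !addr_ge0 ?sqr_ge0. Qed.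

End Quaternions.
Section TypeIII.
Variables (R : realType) (n m : nat) (c : 'I_n -> 'I_n -> 'I_n -> rat) (u : 'rV[rat]_n)
  (T : 'M[rat]_n) (psi : vec rat n m -> vec rat n m -> 'rV[rat]_n)
  (v : 'I_m -> vec rat n m) (e : nat) (alpha : 'rV[R]_n -> 'I_e -> quat R).
Local Notation mR := (amul (cR R c)).
Local Notation tR := (@toR R n).
Local Notation dagR x := ((x : 'rV[R]_n) *m toRmx R T).
Hypothesis Hiso : iso_III c u T alpha.

Lemma alpha_inj3 : injective alpha.
Proof. by case: Hiso => /bij_inj. Qed.
Lemma ginv_ex3 : exists g : ('I_e -> quat R) -> 'rV[R]_n, cancel g alpha.
Proof. by case: (proj1 Hiso) => g _ H; exists g. Qed.
Definition ginv3 : (('I_e -> quat R) -> 'rV[R]_n) :=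
  proj1_sig (constructive_indefinite_description _ ginv_ex3).
Lemma ginvK3 X : alpha (ginv3 X) = X.
Proof.
rewrite /ginv3; case: constructive_indefinite_description => g H /=; exact: H.
Qed.
Lemma alphaD3 x y l : alpha (x + y) l = qadd (alpha x l) (alpha y l).
Proof. by case: Hiso => _ [H _]. Qed.
Lemma alphaZ3 (r : R) x l : alpha (r *: x) l = qscale r (alpha x l).
Proof. by case: Hiso => _ [_ [H _]]. Qed.
Lemma alphaM3 x y l : alpha (mR x y) l = qmul (alpha x l) (alpha y l).
Proof. by case: Hiso => _ [_ [_ [H _]]]. Qed.
Lemma alpha13 l : alpha (tR u) l = qone R.
Proof. by case: Hiso => _ [_ [_ [_ [H _]]]]. Qed.
Lemma alphaC3 x l : alpha (dagR x) l = qconj (alpha x l).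
Proof. by case: Hiso => _ [_ [_ [_ [_ H]]]]. Qed.
Lemma alpha03 l : alpha 0 l = qzero R.
Proof.
have := alphaZ3 0 0 l; rewrite scale0r => ->.
by case: (alpha 0 l) => ????; apply: quat_eq; rewrite /= mul0r.
Qed.

Lemma alpha_ext3 x y : (forall l, alpha x l = alpha y l) -> x = y.
Proof. by move=> H; apply: alpha_inj3; apply: functional_extensionality. Qed.

Lemma mRA3 x y z : mR (mR x y) z = mR x (mR y z).
Proof. by apply: alpha_ext3 => l; rewrite !alphaM3 qmulA. Qed.
Lemma mR13 x : mR (tR u) x = x /\ mR x (tR u) = x.
Proof.
by split; apply: alpha_ext3 => l; rewrite alphaM3 alpha13 ?qmul1q ?qmulq1.
Qed.
Lemma dagRM3 x y : dagR (mR x y) = mR (dagR y) (dagR x).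
Proof. by apply: alpha_ext3 => l; rewrite alphaC3 !alphaM3 !alphaC3 qconjM. Qed.

Definition beta3 (t : 'I_e * 'I_4) (x : 'rV[R]_n) : R := qcomp t.2 (alpha x t.1).
Definition bas3 (t : 'I_e * 'I_4) : 'rV[R]_n :=
  ginv3 (fun l => if l == t.1 then qbasis R t.2 else qzero R).

Lemma regtr3 a : regtr (cR R c) a = \sum_(l < e) 4%:R * qre (alpha a l).
Proof.
rewrite (@trace_decomp R n c _ beta3 bas3).
- under eq_bigr => t _ do rewrite /beta3 /bas3 alphaM3 ginvK3 eqxx.
  rewrite -(pair_bigA _ (fun l k => qcomp k (qmul (alpha a l) (qbasis R k)))) /=.
  by apply: eq_bigr => l _; rewrite qtrace.
- by move=> t x y; rewrite /beta3 alphaD3 qcompD.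
- by move=> t r x; rewrite /beta3 alphaZ3 qcompZ.
move=> x; apply: alpha_ext3 => l; apply: quat_eqc => k.
have fD : forall y1 y2, qcomp k (alpha (y1 + y2) l) = qcomp k (alpha y1 l) + qcomp k (alpha y2 l).
  by move=> y1 y2; rewrite alphaD3 qcompD.
have f0 : qcomp k (alpha 0 l) = 0 by rewrite alpha03 qcomp0.
rewrite (big_morph (fun y => qcomp k (alpha y l)) fD f0).
rewrite (bigD1 (l, k)) //= big1 ?addr0 => [|[l' k'] /= Hne].
  by rewrite alphaZ3 qcompZ /beta3 /bas3 ginvK3 /= eqxx qcomp_basis eqxx mulr1.
rewrite alphaZ3 qcompZ /bas3 ginvK3 /=.
case: eqP => [El|_]; last by rewrite qcomp0 mulr0.
rewrite qcomp_basis; case: eqP => [Ek|_]; last by rewrite mulr0.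
by move: Hne; rewrite El Ek eqxx.
Qed.

End TypeIII.
Lemma typeIII_main (R : realType) (n : nat) (c : 'I_n -> 'I_n -> 'I_n -> rat)
    (u : 'rV[rat]_n) (T : 'M[rat]_n) (m : nat)
    (psi : vec rat n m -> vec rat n m -> 'rV[rat]_n) (v : 'I_m -> vec rat n m)
    (e : nat) (alpha : 'rV[R]_n -> 'I_e -> quat R) :
     pos_div_alg c u T 2 -> iso_III c u T alpha ->
     skew_hermitian_nondeg c T psi -> is_basis c v -> weakly_unitary psi v ->
     exists s sinv : 'I_m -> 'rV[R]_n,
       (forall j, amul (cR R c) (s j) (sinv j) = toR R u /\
                  amul (cR R c) (sinv j) (s j) = toR R u) /\
       let w : 'I_m -> vec R n m := fun j => smul (cR R c) (sinv j) (vecR R (v j)) in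
       is_basis (cR R c) w /\
       weakly_unitary (psiR c u T psi) w /\
       (forall j l, alpha (psiR c u T psi (w j) (w j)) l = qi R) /\
       (forall j, normD c T 2 (s j) <=
           Num.sqrt (Num.sqrt ((2 * 1 * e)%N%:R)) *
           Num.sqrt (normD c T 2 (toR R (psi (v j) (v j))))).
Proof.
move=> [HAU [Hdiv [HI _]]] Hiso HSH Hb Hwu.
set A := fun j l => alpha (toR R (psi (v j) (v j))) l.
have Hpure j l : qre (A j l) = 0.
  have := alphaC3 Hiso (toR R (psi (v j) (v j))) l.
  rewrite (a_skew R v HSH j) -scaleN1r (alphaZ3 Hiso) /A.
  case: (alpha _ l) => a b c' d /= [] H _ _ _; lra.
have Hnz j l : qn2 (A j l) != 0.
  have [ainv [H1 _]] := a_inv R HAU HSH Hb Hwu Hdiv j.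
  have := congr1 (fun x => qn2 (alpha x l)) H1.
  rewrite /= (alphaM3 Hiso) (alpha13 Hiso) qn2M qn2_one => H.
  by apply/eqP => E; move: H; rewrite /A in E; rewrite E mul0r => /eqP; rewrite eq_sym oner_eq0.
have Hex j l := quat_nf (Hpure j l) (Hnz j l).
pose Sf j l := proj1_sig (constructive_indefinite_description _ (Hex j l)).
have HSf j l : qn2 (Sf j l) = Num.sqrt (qn2 (A j l)) /\
    qmul (Sf j l) (qmul (qi R) (qconj (Sf j l))) = A j l.
  by rewrite /Sf; case: constructive_indefinite_description.
have HSn j l : qn2 (Sf j l) != 0.
  by rewrite (proj1 (HSf j l)) sqrtr_eq0 -ltNge lt0r Hnz qn2_ge0.
pose Si j l := qscale (qn2 (Sf j l))^-1 (qconj (Sf j l)).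
have HI3 j l := quat_inv (HSn j l) (proj2 (HSf j l)).
exists (fun j => ginv3 Hiso (Sf j)), (fun j => ginv3 Hiso (Si j)).
have Hss : forall j, amul (cR R c) (ginv3 Hiso (Sf j)) (ginv3 Hiso (Si j)) = toR R u /\
    amul (cR R c) (ginv3 Hiso (Si j)) (ginv3 Hiso (Sf j)) = toR R u.
  move=> j; split; apply: (alpha_ext3 Hiso) => l;
    rewrite (alphaM3 Hiso) !ginvK3 (alpha13 Hiso); by case: (HI3 j l).
split; first exact: Hss.
have [Hbasis [Hwu' Hpsi]] := generic_main HAU HSH Hb Hwu (mRA3 Hiso) (mR13 Hiso) (dagRM3 Hiso) Hss.
split => //; split => //; split.
  move=> j l; rewrite Hpsi (alphaM3 Hiso) (alphaM3 Hiso) (alphaC3 Hiso) !ginvK3.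
  by case: (HI3 j l).
move=> j.
rewrite /normD /Trd !(regtr3 Hiso).
set r := fun l => Num.sqrt (qn2 (A j l)).
have E1 : (\sum_(l < e) 4%:R * qre (alpha (amul (cR R c) (ginv3 Hiso (Sf j))
            (ginv3 Hiso (Sf j) *m toRmx R T)) l)) / 2%:R = 2 * \sum_l r l.
  rewrite mulr_suml mulr_sumr; apply: eq_bigr => l _.
  rewrite (alphaM3 Hiso) (alphaC3 Hiso) ginvK3 qmul_conj /= (proj1 (HSf j l)).
  by rewrite /r; field.
have E2 : (\sum_(l < e) 4%:R * qre (alpha (amul (cR R c) (toR R (psi (v j) (v j)))
            (toR R (psi (v j) (v j)) *m toRmx R T)) l)) / 2%:R = 2 * \sum_l r l ^+ 2.
  rewrite mulr_suml mulr_sumr; apply: eq_bigr => l _.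
  by rewrite (alphaM3 Hiso) (alphaC3 Hiso) qmul_conj /= /r sqr_sqrtr ?qn2_ge0 // /A; field.
rewrite E1 E2 -mulnA; apply: final_ineq.
- by apply: sumr_ge0 => l _; rewrite sqrtr_ge0.
- by apply: sumr_ge0 => l _; rewrite sqr_ge0.
by have := cauchy_schwarz_count r; rewrite card_ord mul1n.
Qed.
Section Skew.
Variables (R : realType) (d : nat).
Local Notation C := (R[i]).
Local Notation cRe := (@complex.Re R).
Local Notation cIm := (@complex.Im R).
Definition ctm (M : 'M[C]_d) : 'M[C]_d := (map_mx (@conjc R) M)^T.

Lemma conjcE (x : C) : conjc x = Num.conj x.
Proof.
rewrite {2}[x]Crect conjC_rect ?Creal_Re ?Creal_Im //.
rewrite -complexRe -complexIm -complexiE.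
case: x => a b /=; apply/eqP; rewrite eq_complex /=; apply/andP; split; apply/eqP; ring.
Qed.

Lemma ctmE M : ctm M = map_mx Num.conj M^T.
Proof. by apply/matrixP => i j; rewrite !mxE conjcE. Qed.
Lemma ctmM A B : ctm (A *m B) = ctm B *m ctm A.
Proof. by rewrite /ctm map_mxM trmx_mul. Qed.
Lemma ctmK A : ctm (ctm A) = A.
Proof. by apply/matrixP => i j; rewrite !mxE conjcK. Qed.
Lemma ctmN A : ctm (- A) = - ctm A.
Proof. by apply/matrixP => i j; rewrite !mxE rmorphN. Qed.
Lemma ctm_diag x : ctm (diag_mx x) = diag_mx (map_mx (@conjc R) x).
Proof. by rewrite /ctm map_diag_mx tr_diag_mx. Qed.

Lemma Re_sum (I : Type) (r : seq I) (F : I -> C) :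
  cRe (\sum_(i <- r) F i) = \sum_(i <- r) cRe (F i).
Proof.
have HD (x y : C) : cRe (x + y) = cRe x + cRe y by case: x => ??; case: y => ??.
have H0 : cRe (0 : C) = 0 by [].
exact: (big_morph cRe HD H0).
Qed.

Lemma cdiag_val (x mu : R) : x != 0 ->
  ((x^-1)%:C%C : C) * (Complex 0 mu) * (x^-1)%:C%C = Complex 0 (mu / x ^+ 2).
Proof.
move=> x0; rewrite /real_complex_def; apply/eqP; rewrite eq_complex /=.
by apply/andP; split; apply/eqP; field.
Qed.

Lemma skew_nf (A : 'M[C]_d) : ctm A = - A -> (exists B, A *m B = 1%:M) ->
  exists (S Sinv : 'M[C]_d) (r : 'I_d -> R),
  [/\ S *m Sinv = 1%:M, Sinv *m S = 1%:M,
      forall a b, a != b -> (Sinv *m (A *m ctm Sinv)) a b = 0,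
      forall a, (Sinv *m (A *m ctm Sinv)) a a = 'i%C \/
                (Sinv *m (A *m ctm Sinv)) a a = - 'i%C &
      [/\ forall k, 0 <= r k, cRe (\tr (S *m ctm S)) = \sum_k r k &
          cRe (\tr (A *m ctm A)) = \sum_k r k ^+ 2]].
Proof.
move=> HA [B HB].
set P := spectralmx A; set sg := spectral_diag A.
have Hn : A \is normalmx.   apply/normalmxP; rewrite -!ctmE HA. by rewrite mulmxN mulNmx.
have Pu : P \is unitarymx := spectral_unitarymx A.
have PPt : P *m ctm P = 1%:M by rewrite ctmE; apply/unitarymxP.
have PtP : ctm P *m P = 1%:M by rewrite ctmE -invmx_unitary // mulVmx // unitarymx_unit.
have XPPt X : X *m P *m ctm P = X by rewrite -mulmxA PPt mulmx1.
have XPtP X : X *m ctm P *m P = X by rewrite -mulmxA PtP mulmx1.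
have Adec : A = ctm P *m diag_mx sg *m P.
  by move/orthomx_spectralP: Hn; rewrite invmx_unitary // -ctmE.
set D := diag_mx sg.
have HD : D = P *m A *m ctm P by rewrite Adec !mulmxA PPt mul1mx XPPt.
have Dskew : ctm D = - D by rewrite HD !ctmM ctmK HA mulNmx mulmxN !mulmxA.
have sgRe k : cRe (sg 0 k) = 0.
  have := congr1 (fun M : 'M[C]_d => M k k) Dskew.
  rewrite /D ctm_diag !mxE eqxx !mulr1n.
  case: (sg 0 k) => a b /= /(congr1 (@complex.Re R)) /= H; lra.
have sgnz k : sg 0 k != 0.
  have E : D *m (P *m B *m ctm P) = 1%:M.
    by rewrite HD !mulmxA XPtP -(mulmxA _ A B) HB mulmx1 PPt.
  have := congr1 (fun M : 'M[C]_d => M k k) E.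
  rewrite mul_diag_mx !mxE eqxx mulr1n => H; apply/eqP => E0.
  by move: H; rewrite E0 mul0r => /eqP; rewrite eq_sym oner_eq0.
pose mu k := cIm (sg 0 k).
have sgE k : sg 0 k = Complex 0 (mu k).
  by rewrite /mu; case: (sg 0 k) (sgRe k) => a b /= ->.
have mu0 k : mu k != 0.
  by apply: contra (sgnz k) => /eqP H; rewrite sgE H.
pose r k := `|mu k|.
have r0 k : 0 < r k by rewrite normr_gt0.
pose rho k := Num.sqrt (r k).
have rho0 k : 0 < rho k by rewrite sqrtr_gt0.
have rho2 k : rho k ^+ 2 = r k by rewrite sqr_sqrtr // ltW.
pose L := diag_mx (\row_k ((rho k)%:C%C : C)).
pose Li := diag_mx (\row_k (((rho k)^-1)%:C%C : C)).
have LLi : L *m Li = 1%:M.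
  rewrite mulmx_diag -diag_const_mx; congr diag_mx; apply/rowP => k.
  by rewrite !mxE -rmorphM /= mulfV ?gt_eqF.
have LiL : Li *m L = 1%:M.
  rewrite mulmx_diag -diag_const_mx; congr diag_mx; apply/rowP => k.
  by rewrite !mxE -rmorphM /= mulVf ?gt_eqF.
have ctmL : ctm L = L.
  by rewrite ctm_diag; congr diag_mx; apply/rowP => k; rewrite !mxE conjc_real.
have ctmLi : ctm Li = Li.
  by rewrite ctm_diag; congr diag_mx; apply/rowP => k; rewrite !mxE conjc_real.
exists (ctm P *m L), (Li *m P), r.
have Hmid : Li *m P *m (A *m ctm (Li *m P)) = Li *m D *m Li.
  by rewrite ctmM ctmLi HD !mulmxA.
split.
- by rewrite !mulmxA -(mulmxA _ L Li) LLi mulmx1 PtP.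
- by rewrite !mulmxA XPPt LiL.
- move=> a b ab; rewrite Hmid /Li /D !mulmx_diag !mxE.
  by rewrite (negbTE ab) !mulr0n.
- move=> a; rewrite Hmid /Li /D !mulmx_diag !mxE eqxx !mulr1n.
  rewrite sgE cdiag_val ?gt_eqF // rho2 /r.
  case: (ltrP 0 (mu a)) => Hm.
    by left; rewrite gtr0_norm // divff // gt_eqF.
  have Hm' : mu a < 0 by rewrite lt_neqAle Hm mu0.
  right; rewrite ltr0_norm // invrN mulrN divff ?lt_eqF //.
  by apply/eqP; rewrite eq_complex /= oppr0 !eqxx.
split.
- by move=> k; rewrite ltW.
- rewrite ctmM ctmK ctmL !mulmxA mxtrace_mulC !mulmxA PPt mul1mx mulmx_diag mxtrace_diag.
  rewrite Re_sum; apply: eq_bigr => k _; rewrite !mxE /= -rho2 /real_complex_def /=; ring.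
have -> : A *m ctm A = ctm P *m (D *m ctm D) *m P.
  by rewrite Adec !ctmM ctmK !mulmxA -/D XPPt.
rewrite mxtrace_mulC !mulmxA PPt mul1mx ctm_diag mulmx_diag mxtrace_diag.
rewrite Re_sum; apply: eq_bigr => k _; rewrite !mxE sgE /= /r real_normK ?num_real //.
ring.
Qed.

End Skew.
Section TypeIV.
Variables (R : realType) (n m : nat) (c : 'I_n -> 'I_n -> 'I_n -> rat) (u : 'rV[rat]_n)
  (T : 'M[rat]_n) (e d : nat) (alpha : 'rV[R]_n -> 'I_e -> 'M[R[i]]_d).
Local Notation C := (R[i]).
Local Notation cRe := (@complex.Re R).
Local Notation cIm := (@complex.Im R).
Local Notation mR := (amul (cR R c)).
Local Notation tR := (@toR R n).
Local Notation dagR x := ((x : 'rV[R]_n) *m toRmx R T).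
Hypothesis Hiso : iso_IV c u T alpha.

Lemma alpha_inj4 : injective alpha.
Proof. by case: Hiso => /bij_inj. Qed.
Lemma ginv_ex4 : exists g : ('I_e -> 'M[C]_d) -> 'rV[R]_n, cancel g alpha.
Proof. by case: (proj1 Hiso) => g _ H; exists g. Qed.
Definition ginv4 : (('I_e -> 'M[C]_d) -> 'rV[R]_n) :=
  proj1_sig (constructive_indefinite_description _ ginv_ex4).
Lemma ginvK4 X : alpha (ginv4 X) = X.
Proof.
rewrite /ginv4; case: constructive_indefinite_description => g H /=; exact: H.
Qed.
Lemma alphaD4 x y l : alpha (x + y) l = alpha x l + alpha y l.
Proof. by case: Hiso => _ [H _]. Qed.
Lemma alphaZ4 (r : R) x l : alpha (r *: x) l = (r%:C)%C *: alpha x l.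
Proof. by case: Hiso => _ [_ [H _]]. Qed.
Lemma alphaM4 x y l : alpha (mR x y) l = alpha x l *m alpha y l.
Proof. by case: Hiso => _ [_ [_ [H _]]]. Qed.
Lemma alpha14 l : alpha (tR u) l = 1%:M.
Proof. by case: Hiso => _ [_ [_ [_ [H _]]]]. Qed.
Lemma alphaC4 x l : alpha (dagR x) l = ctm (alpha x l).
Proof. by case: Hiso => _ [_ [_ [_ [_ H]]]]. Qed.
Lemma alpha04 l : alpha 0 l = 0.
Proof.
have := alphaZ4 0 0 l; rewrite scale0r => ->.
by rewrite /real_complex_def /= scale0r.
Qed.

Lemma alpha_ext4 x y : (forall l, alpha x l = alpha y l) -> x = y.
Proof. by move=> H; apply: alpha_inj4; apply: functional_extensionality. Qed.

Lemma mRA4 x y z : mR (mR x y) z = mR x (mR y z).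
Proof. by apply: alpha_ext4 => l; rewrite !alphaM4 mulmxA. Qed.
Lemma mR14 x : mR (tR u) x = x /\ mR x (tR u) = x.
Proof.
by split; apply: alpha_ext4 => l; rewrite alphaM4 alpha14 ?mul1mx ?mulmx1.
Qed.
Lemma dagRM4 x y : dagR (mR x y) = mR (dagR y) (dagR x).
Proof. by apply: alpha_ext4 => l; rewrite alphaC4 !alphaM4 !alphaC4 ctmM. Qed.

Definition beta4 (t : 'I_e * ('I_d * 'I_d * bool)) (x : 'rV[R]_n) : R :=
  (if t.2.2 then cIm else cRe) ((alpha x t.1) t.2.1.1 t.2.1.2).
Definition bas4 (t : 'I_e * ('I_d * 'I_d * bool)) : 'rV[R]_n :=
  ginv4 (fun l => if l == t.1 then
     ((if t.2.2 then 'i%C else 1) *: delta_mx t.2.1.1 t.2.1.2) else 0).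

Lemma cReD (x y : C) : cRe (x + y) = cRe x + cRe y. Proof. by case: x => ??; case: y => ??. Qed.
Lemma cImD (x y : C) : cIm (x + y) = cIm x + cIm y. Proof. by case: x => ??; case: y => ??. Qed.
Lemma cReZ (r : R) (x : C) : cRe ((r%:C)%C * x) = r * cRe x.
Proof. by case: x => ??; rewrite /real_complex_def /=; ring. Qed.
Lemma cImZ (r : R) (x : C) : cIm ((r%:C)%C * x) = r * cIm x.
Proof. by case: x => ??; rewrite /real_complex_def /=; ring. Qed.

Lemma ent_delta (M : 'M[C]_d) (k : C) (p q : 'I_d) : (M *m (k *: delta_mx p q : 'M_d)) p q = k * M p p.
Proof.
rewrite !mxE (bigD1 p) //= big1 ?addr0 => [|j jp].
  by rewrite !mxE !eqxx mulr1 mulrC.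
by rewrite !mxE (negbTE jp) mulr0 mulr0.
Qed.

Lemma regtr4 a : regtr (cR R c) a = \sum_(l < e) (2 * d)%:R * cRe (\tr (alpha a l)).
Proof.
rewrite (@trace_decomp R n c _ beta4 bas4).
- under eq_bigr => t _ do rewrite /beta4 /bas4 alphaM4 ginvK4 eqxx ent_delta.
  rewrite -(pair_bigA _ (fun l s => (if s.2 then cIm else cRe)
                    ((if s.2 then 'i%C else 1) * alpha a l s.1.1 s.1.1))) /=.
  apply: eq_bigr => l _.
  rewrite -(pair_bigA _ (fun pq b => (if b then cIm else cRe)
                    ((if b then 'i%C else 1) * alpha a l pq.1 pq.1))) /=.
  rewrite -(pair_bigA _ (fun p q => \sum_(b : bool) (if b then cIm else cRe)
                    ((if b then 'i%C else 1) * alpha a l p p))) /=.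
  rewrite /mxtrace Re_sum mulr_sumr; apply: eq_bigr => p _.
  under eq_bigr => q _ do rewrite big_bool /= mul1r.
  rewrite sumr_const card_ord -mulr_natl natrM.
  by case: (alpha a l p p) => ??; rewrite /= ; ring.
- by move=> t x y; rewrite /beta4 alphaD4 mxE; case: (t.2.2); rewrite ?cReD ?cImD.
- by move=> t r x; rewrite /beta4 alphaZ4 mxE; case: (t.2.2); rewrite ?cReZ ?cImZ.
move=> x; apply: alpha_ext4 => l; apply/matrixP => p q.
have fD : forall y1 y2, alpha (y1 + y2) l p q = alpha y1 l p q + alpha y2 l p q.
  by move=> y1 y2; rewrite alphaD4 mxE.
have f0 : alpha 0 l p q = 0 by rewrite alpha04 mxE.
rewrite (big_morph (fun y => alpha y l p q) fD f0).
under eq_bigr => t _ do rewrite alphaZ4 mxE /bas4 ginvK4.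
set t1 := (l, (p, q, false)); set t2 := (l, (p, q, true)).
rewrite (bigD1 t1) // (bigD1 t2) /=; last by rewrite /t1 /t2 !xpair_eqE !eqxx.
rewrite big1 ?addr0 => [|[l' [[p' q'] b]] /andP [H2 H1]].
  rewrite /beta4 /= !eqxx !mxE !eqxx /=.
  by case: (alpha x l p q) => ??; apply/eqP; rewrite eq_complex /= /real_complex_def /=;
     apply/andP; split; apply/eqP; ring.
rewrite /=; case: eqP => [El|_]; last by rewrite mxE mulr0.
rewrite !mxE; case: eqP => [Ep|_]; last by rewrite /= !mulr0.
case: eqP => [Eq|_]; last by rewrite /= !mulr0.
subst l' p' q'; move: H1 H2; rewrite /t1 /t2 !xpair_eqE !eqxx /=.
by case: b.
Qed.

End TypeIV.
Definition skewQ (R : realType) (d : nat) (A : 'M[R[i]]_d)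
    (p : 'M[R[i]]_d * 'M[R[i]]_d * ('I_d -> R)) : Prop :=
  [/\ p.1.1 *m p.1.2 = 1%:M, p.1.2 *m p.1.1 = 1%:M,
      forall a b, a != b -> (p.1.2 *m (A *m ctm p.1.2)) a b = 0,
      forall a, (p.1.2 *m (A *m ctm p.1.2)) a a = 'i%C \/
                (p.1.2 *m (A *m ctm p.1.2)) a a = - 'i%C &
      [/\ forall k, 0 <= p.2 k, complex.Re (\tr (p.1.1 *m ctm p.1.1)) = \sum_k p.2 k &
          complex.Re (\tr (A *m ctm A)) = \sum_k p.2 k ^+ 2]].

Lemma typeIV_main (R : realType) (n : nat) (c : 'I_n -> 'I_n -> 'I_n -> rat)
    (u : 'rV[rat]_n) (T : 'M[rat]_n) (m : nat)
    (psi : vec rat n m -> vec rat n m -> 'rV[rat]_n) (v : 'I_m -> vec rat n m)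
    (e d : nat) (alpha : 'rV[R]_n -> 'I_e -> 'M[R[i]]_d) :
     pos_div_alg c u T d -> iso_IV c u T alpha ->
     skew_hermitian_nondeg c T psi -> is_basis c v -> weakly_unitary psi v ->
     exists s sinv : 'I_m -> 'rV[R]_n,
       (forall j, amul (cR R c) (s j) (sinv j) = toR R u /\
                  amul (cR R c) (sinv j) (s j) = toR R u) /\
       let w : 'I_m -> vec R n m := fun j => smul (cR R c) (sinv j) (vecR R (v j)) in
       is_basis (cR R c) w /\
       weakly_unitary (psiR c u T psi) w /\
       (forall j l a b,
          (a != b -> alpha (psiR c u T psi (w j) (w j)) l a b = 0) /\
          (alpha (psiR c u T psi (w j) (w j)) l a a = 'i%C \/
           alpha (psiR c u T psi (w j) (w j)) l a a = - 'i%C)) /\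
       (forall j, normD c T d (s j) <=
           Num.sqrt (Num.sqrt ((2 * d * e)%N%:R)) *
           Num.sqrt (normD c T d (toR R (psi (v j) (v j))))).
Proof.
move=> [HAU [Hdiv [HI _]]] Hiso HSH Hb Hwu.
have dn0 : d != 0%N.
  apply/eqP => d0; case: (Hdiv) => Hu _; move/negP: Hu; apply.
  rewrite -(toR_eq0 R); apply/eqP; apply: (alpha_ext4 Hiso) => l.
  by apply/matrixP => p; exfalso; have := ltn_ord p; move: (nat_of_ord p); rewrite d0.
have alphaN x l : alpha (- x) l = - alpha x l.
  by apply/eqP; rewrite -addr_eq0 -(alphaD4 Hiso) addNr (alpha04 Hiso).
set A := fun j l => alpha (toR R (psi (v j) (v j))) l.
have Hskew j l : ctm (A j l) = - A j l.
  by rewrite /A -(alphaC4 Hiso) (a_skew R v HSH j) alphaN.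
have Hinv j l : exists B, A j l *m B = 1%:M.
  have [ainv [H1 _]] := a_inv R HAU HSH Hb Hwu Hdiv j.
  by exists (alpha ainv l); rewrite /A -(alphaM4 Hiso) H1 (alpha14 Hiso).
have Hex j l : exists p, skewQ (A j l) p.
  by have [S [Si [r H]]] := skew_nf (Hskew j l) (Hinv j l); exists (S, Si, r).
have [F HF] : exists F : 'I_m -> 'I_e -> 'M[R[i]]_d * 'M[R[i]]_d * ('I_d -> R),
    forall j l, skewQ (A j l) (F j l).
  exists (fun j l => proj1_sig (constructive_indefinite_description _ (Hex j l))).
  by move=> j l; exact: (proj2_sig (constructive_indefinite_description _ (Hex j l))).
exists (fun j => ginv4 Hiso (fun l => (F j l).1.1)),
       (fun j => ginv4 Hiso (fun l => (F j l).1.2)).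
have Hss : forall j,
    amul (cR R c) (ginv4 Hiso (fun l => (F j l).1.1)) (ginv4 Hiso (fun l => (F j l).1.2)) = toR R u /\
    amul (cR R c) (ginv4 Hiso (fun l => (F j l).1.2)) (ginv4 Hiso (fun l => (F j l).1.1)) = toR R u.
  move=> j; split; apply: (alpha_ext4 Hiso) => l;
    rewrite (alphaM4 Hiso) !ginvK4 (alpha14 Hiso); by case: (HF j l).
split; first exact: Hss.
have [Hbasis [Hwu' Hpsi]] := generic_main HAU HSH Hb Hwu (mRA4 Hiso) (mR14 Hiso) (dagRM4 Hiso) Hss.
split => //; split => //; split.
  move=> j l a b; rewrite Hpsi (alphaM4 Hiso) (alphaM4 Hiso) (alphaC4 Hiso) !ginvK4.
  by case: (HF j l) => _ _ H1 H2 _; split; [exact: H1 | exact: H2].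
move=> j.
rewrite /normD /Trd !(regtr4 Hiso).
pose rr (t : 'I_e * 'I_d) := (F j t.1).2 t.2.
have E1 : (\sum_(l < e) (2 * d)%:R * complex.Re (\tr (alpha (amul (cR R c)
            (ginv4 Hiso (fun l => (F j l).1.1))
            (ginv4 Hiso (fun l => (F j l).1.1) *m toRmx R T)) l))) / d%:R
          = 2 * \sum_t rr t.
  rewrite /rr -(pair_bigA _ (fun l k => (F j l).2 k)) /= mulr_suml mulr_sumr.
  apply: eq_bigr => l _.
  rewrite (alphaM4 Hiso) (alphaC4 Hiso) ginvK4.
  case: (HF j l) => _ _ _ _ [_ -> _].
  by rewrite natrM; field; rewrite pnatr_eq0.
have E2 : (\sum_(l < e) (2 * d)%:R * complex.Re (\tr (alpha (amul (cR R c)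
            (toR R (psi (v j) (v j))) (toR R (psi (v j) (v j)) *m toRmx R T)) l))) / d%:R
          = 2 * \sum_t rr t ^+ 2.
  rewrite /rr -(pair_bigA _ (fun l k => (F j l).2 k ^+ 2)) /= mulr_suml mulr_sumr.
  apply: eq_bigr => l _.
  rewrite (alphaM4 Hiso) (alphaC4 Hiso) -/(A j l).
  case: (HF j l) => _ _ _ _ [_ _ ->].
  by rewrite natrM; field; rewrite pnatr_eq0.
rewrite E1 E2 -mulnA; apply: final_ineq.
- by apply: sumr_ge0 => t _; case: (HF j t.1) => _ _ _ _ [H _ _]; exact: H.
- by apply: sumr_ge0 => t _; rewrite sqr_ge0.
by have := cauchy_schwarz_count rr; rewrite card_prod !card_ord mulnC.
Qed.

Unset Implicit Arguments.

Theorem lemma2p17 (R : realType) (n : nat) (c : 'I_n -> 'I_n -> 'I_n -> rat)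
    (u : 'rV[rat]_n) (T : 'M[rat]_n) (m : nat)
    (psi : vec rat n m -> vec rat n m -> 'rV[rat]_n) (v : 'I_m -> vec rat n m) :
  (* Type III *)
  (forall (e : nat) (alpha : 'rV[R]_n -> 'I_e -> quat R),
     pos_div_alg c u T 2 -> iso_III c u T alpha ->
     skew_hermitian_nondeg c T psi -> is_basis c v -> weakly_unitary psi v ->
     exists s sinv : 'I_m -> 'rV[R]_n,
       (forall j, amul (cR R c) (s j) (sinv j) = toR R u /\
                  amul (cR R c) (sinv j) (s j) = toR R u) /\
       let w : 'I_m -> vec R n m := fun j => smul (cR R c) (sinv j) (vecR R (v j)) in
       is_basis (cR R c) w /\
       weakly_unitary (psiR c u T psi) w /\
       (forall j l, alpha (psiR c u T psi (w j) (w j)) l = qi R) /\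
       (forall j, normD c T 2 (s j) <=
           Num.sqrt (Num.sqrt ((2 * 1 * e)%N%:R)) *
           Num.sqrt (normD c T 2 (toR R (psi (v j) (v j)))))) /\
  (* Type IV *)
  (forall (e d : nat) (alpha : 'rV[R]_n -> 'I_e -> 'M[R[i]]_d),
     pos_div_alg c u T d -> iso_IV c u T alpha ->
     skew_hermitian_nondeg c T psi -> is_basis c v -> weakly_unitary psi v ->
     exists s sinv : 'I_m -> 'rV[R]_n,
       (forall j, amul (cR R c) (s j) (sinv j) = toR R u /\
                  amul (cR R c) (sinv j) (s j) = toR R u) /\
       let w : 'I_m -> vec R n m := fun j => smul (cR R c) (sinv j) (vecR R (v j)) in
       is_basis (cR R c) w /\
       weakly_unitary (psiR c u T psi) w /\
       (forall j l a b,
          (a != b -> alpha (psiR c u T psi (w j) (w j)) l a b = 0) /\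
          (alpha (psiR c u T psi (w j) (w j)) l a a = 'i%C \/
           alpha (psiR c u T psi (w j) (w j)) l a a = - 'i%C)) /\
       (forall j, normD c T d (s j) <=
           Num.sqrt (Num.sqrt ((2 * d * e)%N%:R)) *
           Num.sqrt (normD c T d (toR R (psi (v j) (v j)))))).
Proof.
split.
  by move=> e alpha; apply: typeIII_main.
by move=> e d alpha; apply: typeIV_main.
Qed.
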